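(* Let $n_1,\dots,n_d\ge 1$ and let $C\subseteq\mathrm{HS}(n_1,\dots,n_d)$ be a code with $M=|C|\ge 1$ codewords such that $d(x,y)\ge\delta$ for all distinct $x,y\in C$, where $\delta>0$. Put $r=1-\sum_{i=1}^d (d\,n_i)^{-1}$ and suppose $rd<\delta$. Then \[M\le\left\lfloor\frac{\delta}{\delta-rd}\right\rfloor.\]
   Context: For an integer $m$ let $[m]=\{0,\dots,m-1\}$. The cuboidal Hamming space $\mathrm{HS}(n_1,\dots,n_d)$ is $[n_1]\times\cdots\times[n_d]$ with Hamming distance $d(x,y)=|\{i:x_i\ne y_i\}|$. *)

(* Defs.v *)
From HB Require Import structures.
From mathcomp Require Import all_boot all_order all_algebra.
Set Implicit Arguments. Unset Strict Implicit. Unset Printing Implicit Defensive.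
Import Order.TTheory GRing.Theory Num.Theory.

Definition HS (d : nat) (n : 'I_d -> nat) : finType :=
  {dffun forall i : 'I_d, 'I_(n i)}.

Definition hdist (d : nat) (n : 'I_d -> nat) (x y : HS n) : nat :=
  #|[set i : 'I_d | x i != y i]|.

(* Main.v *)
Require Import Defs.
From HB Require Import structures.
From mathcomp Require Import all_boot all_order all_algebra.
From mathcomp Require Import ring lra.
Import Order.TTheory GRing.Theory Num.Theory.
Local Open Scope ring_scope.

Lemma hdistE (R : numDomainType) d (n : 'I_d -> nat) (x y : HS n) :
  (hdist x y)%:R = \sum_i ((x i != y i)%:R : R).
Proof.
rewrite /hdist -sum1_card natr_sum big_mkcond /=; apply: eq_bigr => i _.
by rewrite inE; case: (x i != y i).
Qed.

Lemma sq_bound (R : realFieldType) (m : nat) (c : 'I_m -> R) (M : R) :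
  (0 < m)%N -> \sum_a c a = M -> M ^+ 2 / m%:R <= \sum_a c a ^+ 2.
Proof.
move=> m0 sc; set k := M / m%:R.
have H : 0 <= \sum_a (c a - k) ^+ 2 by apply: sumr_ge0 => a _; exact: sqr_ge0.
have E : \sum_a (c a - k) ^+ 2 = \sum_a c a ^+ 2 - (\sum_a c a) * k *+ 2 + k ^+ 2 *+ m.
  under eq_bigr do rewrite sqrrB.
  rewrite big_split sumrB /= sumr_const card_ord; congr (_ + _).
  by rewrite sumrMnl mulr_suml.
rewrite E sc in H.
have mR : m%:R != 0 :> R by rewrite pnatr_eq0 -lt0n.
have e : M * k *+ 2 - k ^+ 2 *+ m = M ^+ 2 / m%:R.
  rewrite -[M * k *+ 2]mulr_natr -[k ^+ 2 *+ m]mulr_natr /k.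
  by field; exact: mR.
by rewrite -e -subr_ge0 opprB addrA addrAC.
Qed.

Lemma coord_count (R : realFieldType) d (n : 'I_d -> nat) (C : {set HS n}) (i : 'I_d) :
  (0 < n i)%N ->
  \sum_(x in C) \sum_(y in C) ((x i != y i)%:R : R)
    <= #|C|%:R ^+ 2 - #|C|%:R ^+ 2 / (n i)%:R.
Proof.
move=> ni0.
pose c := fun a : 'I_(n i) => \sum_(x in C) ((x i == a)%:R : R).
have sc : \sum_a c a = #|C|%:R.
  rewrite /c exchange_big /= -sumr_const; apply: eq_bigr => x _.
  rewrite (bigD1 (x i)) //= eqxx big1 ?addr0 // => a /negbTE.
  by rewrite eq_sym => ->.
have key : \sum_(x in C) \sum_(y in C) ((x i != y i)%:R : R)
    = #|C|%:R ^+ 2 - \sum_a c a ^+ 2.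
  transitivity (\sum_(x in C) \sum_(y in C)
     (1 - \sum_a ((x i == a)%:R * (y i == a)%:R : R))).
    apply: eq_bigr => x _; apply: eq_bigr => y _.
    rewrite (bigD1 (x i)) //= eqxx mul1r big1 ?addr0; last first.
      by move=> a /negbTE; rewrite eq_sym => ->; rewrite mul0r.
    have -> : (y i == x i) = (x i == y i) by apply: eq_sym.
    by case: (x i == y i); rewrite ?subrr ?subr0.
  under eq_bigr do rewrite sumrB.
  rewrite sumrB; congr (_ - _).
    by rewrite !sumr_const expr2 mulr_natr.
  under eq_bigr => x _ do rewrite exchange_big.
  rewrite exchange_big /=; apply: eq_bigr => a _.
  rewrite expr2 /c mulr_suml; apply: eq_bigr => x _.
  by rewrite mulr_sumr.
rewrite key lerD2l lerN2 -sc; apply: sq_bound => //.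
Qed.

Theorem mainTheorem10 (R : archiRealFieldType) (d : nat) (n : 'I_d -> nat)
  (C : {set HS n}) (delta : R) :
  (forall i, (1 <= n i)%N) ->
  (1 <= #|C|)%N ->
  (0 < delta)%R ->
  (forall x y, x \in C -> y \in C -> x != y -> (delta <= (hdist x y)%:R)%R) ->
  let r : R := (1 - \sum_(i < d) ((d * n i)%:R)^-1)%R in
  (r * d%:R < delta)%R ->
  (#|C|%:Z <= Num.floor (delta / (delta - r * d%:R)))%R.
Proof.
move=> n1 C1 dpos hd r rd.
set M := #|C|.
have MR : 0 < M%:R :> R by rewrite ltr0n.
pose S := \sum_(x in C) \sum_(y in C) ((hdist x y)%:R : R).
have low : \sum_(x in C) (M%:R * delta - delta) <= S.
  apply: ler_sum => x xC.
  have e : \sum_(y in C) (delta - (x == y)%:R * delta) = M%:R * delta - delta.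
    rewrite sumrB sumr_const -mulr_suml (bigD1 x xC) /= eqxx big1 ?addr0.
      by rewrite mul1r mulr_natl.
    by move=> y /andP [_ /negbTE]; rewrite eq_sym => ->.
  rewrite -e; apply: ler_sum => y yC.
  case: (eqVneq x y) => [<-|ne]; first by rewrite mul1r subrr ler0n.
  by rewrite mul0r subr0; apply: hd.
rewrite sumr_const -[(_ - delta) *+ _]mulr_natl in low.
have eS : S = \sum_i \sum_(x in C) \sum_(y in C) ((x i != y i)%:R : R).
  rewrite /S (eq_bigr (fun x : HS n => \sum_i \sum_(y in C) ((x i != y i)%:R : R))).
    by rewrite exchange_big.
  move=> x _; rewrite (eq_bigr (fun y : HS n => \sum_i ((x i != y i)%:R : R))).
    by rewrite exchange_big.
  by move=> y _; apply: hdistE.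
have up : S <= M%:R ^+ 2 * (r * d%:R).
  rewrite eS.
  apply: le_trans (_ : \sum_i (M%:R ^+ 2 - M%:R ^+ 2 / (n i)%:R) <= _).
    by apply: ler_sum => i _; apply: coord_count.
  rewrite le_eqVlt; apply/orP; left; apply/eqP.
  rewrite /r mulrBl mul1r mulr_suml.
  rewrite {1}(_ : d%:R = \sum_(i < d) (1 : R)); last by rewrite sumr_const card_ord.
  rewrite -sumrB mulr_sumr; apply: eq_bigr => i _.
  have d0 : d%:R != 0 :> R.
    by rewrite pnatr_eq0 -lt0n (leq_ltn_trans (leq0n i) (ltn_ord i)).
  by rewrite natrM invfM [_ / _ * d%:R]mulrAC mulVf // mul1r mulrBr mulr1.
have h := le_trans low up.
rewrite expr2 -mulrA ler_pM2l // in h.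
rewrite floor_ge_int ler_pdivlMr ?subr_gt0 //.
rewrite pmulrn.
rewrite mulrBr; lra.
Qed.
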